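(* Let $\mathcal{C}$ be a category, $A,B$ objects of $\mathcal{C}$, and $L\subseteq\mathcal{C}(A,B)$ a regular language of arrows. If $F:\mathcal{C}\to\mathcal{D}$ is a finitary ULF functor of categories, then the image $F(L)\subseteq\mathcal{D}(F(A),F(B))$ is a regular language of arrows in $\mathcal{D}$.
   Context: Composition is written diagrammatically. A functor $p:\mathcal{Q}\to\mathcal{C}$ is ULF if for every arrow $\alpha$ of $\mathcal{Q}$ and arrows $u,v$ of $\mathcal{C}$ with $p(\alpha)=uv$ there is a unique pair $\beta,\gamma$ with $\alpha=\beta\gamma$, $p(\beta)=u$, $p(\gamma)=v$; it is finitary if the fibers $p^{-1}(A)$ over objects and $p^{-1}(w)$ over arrows are all finite. A nondeterministic finite-state automaton over $\mathcal{C}$ is a tuple $M=(\mathcal{C},\mathcal{Q},p,q_0,q_f)$ with $p:\mathcal{Q}\to\mathcal{C}$ finitary ULF and $q_0,q_f$ objects of $\mathcal{Q}$; it recognizes $\{p(\alpha)\mid\alpha:q_0\to q_f\}\subseteq\mathcal{C}(p(q_0),p(q_f))$. A subset $L\subseteq\mathcal{C}(A,B)$ is a regular language of arrows if it is the language recognized by such an automaton with $p(q_0)=A$ and $p(q_f)=B$. *)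

(* Defs.v *)
From Stdlib Require Import List.
Set Implicit Arguments.
Unset Strict Implicit.

(* Composition is diagrammatic: comp f g = "f then g". *)
Record Category := {
  Ob :> Type;
  Hom : Ob -> Ob -> Type;
  idc : forall a, Hom a a;
  comp : forall a b c, Hom a b -> Hom b c -> Hom a c;
  comp_id_l : forall a b (f : Hom a b), comp (idc a) f = f;
  comp_id_r : forall a b (f : Hom a b), comp f (idc b) = f;
  comp_assoc : forall a b c d (f : Hom a b) (g : Hom b c) (h : Hom c d),
      comp (comp f g) h = comp f (comp g h)
}.

Arguments Hom {C} a b : rename.
Arguments idc {C} a : rename.
Arguments comp {C a b c} f g : rename.

Record Functor (C D : Category) := {
  fob :> Ob C -> Ob D;
  fmap : forall a b : Ob C, Hom a b -> Hom (fob a) (fob b);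
  fmap_id : forall a, fmap (idc a) = idc (fob a);
  fmap_comp : forall a b c (f : Hom a b) (g : Hom b c),
      fmap (comp f g) = comp (fmap f) (fmap g)
}.

Arguments fmap {C D} F {a b} f : rename.

(* An arrow packaged together with its domain and codomain; used to state
   equalities between arrows whose (co)domains are only propositionally equal. *)
Definition Arr (C : Category) := {a : Ob C & {b : Ob C & Hom a b}}.
Definition pk {C : Category} {a b : Ob C} (f : Hom a b) : Arr C :=
  existT _ a (existT _ b f).
Definition mapArr {C D : Category} (F : Functor C D) (x : Arr C) : Arr D :=
  pk (fmap F (projT2 (projT2 x))).

Definition finite_subset {T : Type} (P : T -> Prop) : Prop :=
  exists s : list T, forall x, P x -> In x s.

Definition ULF {Q C : Category} (p : Functor Q C) : Prop :=
  forall (x y : Ob Q) (alpha : Hom x y) (c : Ob C)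
         (u : Hom (p x) c) (v : Hom c (p y)),
    fmap p alpha = comp u v ->
    exists! t : {z : Ob Q & (Hom x z * Hom z y)%type},
      alpha = comp (fst (projT2 t)) (snd (projT2 t)) /\
      pk (fmap p (fst (projT2 t))) = pk u /\
      pk (fmap p (snd (projT2 t))) = pk v.

Definition finitary {Q C : Category} (p : Functor Q C) : Prop :=
  (forall A : Ob C, finite_subset (fun x : Ob Q => p x = A)) /\
  (forall w : Arr C, finite_subset (fun a : Arr Q => mapArr p a = w)).

(* Language recognized by the automaton (C, Q, p, q0, qf), viewed as a
   subset of C(A,B) when p q0 = A and p qf = B. *)
Definition recognizes {C Q : Category} (p : Functor Q C) (q0 qf : Ob Q)
  {A B : Ob C} (L : Hom A B -> Prop) : Prop :=
  forall f : Hom A B, L f <-> exists alpha : Hom q0 qf, pk (fmap p alpha) = pk f.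

Definition regular_language {C : Category} {A B : Ob C} (L : Hom A B -> Prop)
  : Prop :=
  exists (Q : Category) (p : Functor Q C) (q0 qf : Ob Q),
    ULF p /\ finitary p /\ p q0 = A /\ p qf = B /\ recognizes p q0 qf L.

Definition image_lang {C D : Category} (F : Functor C D) {A B : Ob C}
  (L : Hom A B -> Prop) : Hom (F A) (F B) -> Prop :=
  fun g => exists f : Hom A B, L f /\ fmap F f = g.

(* Main.v *)
Require Import Defs.
From Stdlib Require Import List Eqdep.

Definition compF {Q C D : Category} (p : Functor Q C) (F : Functor C D) : Functor Q D.
Proof.
  refine {| fob := fun x => F (p x); fmap := fun a b f => fmap F (fmap p f) |}.
  - intros a. rewrite !fmap_id. reflexivity.
  - intros a b c f g. rewrite !fmap_comp. reflexivity.
Defined.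

Lemma fin_union {T U : Type} (P : T -> U -> Prop) (s : list T) :
  (forall c, exists l, forall x, P c x -> In x l) ->
  exists l, forall x, (exists c, In c s /\ P c x) -> In x l.
Proof.
  intros H. induction s as [|c s IH].
  - exists nil. intros x [c [[] _]].
  - destruct IH as [l Hl]. destruct (H c) as [l' Hl'].
    exists (l' ++ l). intros x [c0 [[<-|Hin] HP]]; apply in_or_app.
    + left; auto.
    + right; apply Hl; eauto.
Qed.

Lemma compF_finitary {Q C D : Category} (p : Functor Q C) (F : Functor C D) :
  finitary p -> finitary F -> finitary (compF p F).
Proof.
  intros [Hp1 Hp2] [HF1 HF2]. split.
  - intros A. destruct (HF1 A) as [s Hs].
    destruct (fin_union (fun c (x : Ob Q) => p x = c) s Hp1) as [l Hl].
    exists l. intros x Hx. apply Hl. exists (p x). split; auto.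
  - intros w. destruct (HF2 w) as [s Hs].
    destruct (fin_union (fun c (x : Arr Q) => mapArr p x = c) s Hp2) as [l Hl].
    exists l. intros x Hx. apply Hl. exists (mapArr p x). split; auto.
Qed.

Lemma compF_ULF {Q C D : Category} (p : Functor Q C) (F : Functor C D) :
  ULF p -> ULF F -> ULF (compF p F).
Proof.
  intros Hp HF x y alpha c u v Heq.
  destruct (HF (p x) (p y) (fmap p alpha) c u v Heq) as [t1 [[E1 [Fu Fv]] U1]].
  destruct t1 as [z' [u' v']]. simpl in *.
  destruct (Hp x y alpha z' u' v' E1) as [t2 [[E2 [Pu Pv]] U2]].
  exists t2. split.
  - split; [exact E2|]. destruct t2 as [z [b g]]; simpl in *.
    split.
    + change (mapArr F (pk (fmap p b)) = pk u). rewrite Pu. exact Fu.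
    + change (mapArr F (pk (fmap p g)) = pk v). rewrite Pv. exact Fv.
  - intros [z2 [b2 g2]] [E3 [Hu Hv]]. simpl in *.
    apply U2. simpl.
    assert (T : existT (fun z => (Hom (p x) z * Hom z (p y))%type) z' (u', v')
              = existT _ (p z2) (fmap p b2, fmap p g2)).
    { apply U1. simpl. split; [rewrite E3; apply fmap_comp|]. split; assumption. }
    split; [exact E3|]. split.
    + apply (f_equal (fun t : {z : Ob C & (Hom (p x) z * Hom z (p y))%type} =>
                        pk (fst (projT2 t)))) in T. simpl in T. symmetry; exact T.
    + apply (f_equal (fun t : {z : Ob C & (Hom (p x) z * Hom z (p y))%type} =>
                        pk (snd (projT2 t)))) in T. simpl in T. symmetry; exact T.
Qed.

Theorem mainTheorem10 (C D : Category) (A B : Ob C) (L : Hom A B -> Prop)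
  (F : Functor C D) :
  regular_language L -> ULF F -> finitary F ->
  regular_language (@image_lang C D F A B L).
Proof.
  intros [Q [p [q0 [qf [Hu [Hf [EA [EB Hr]]]]]]]] HFu HFf.
  subst A B.
  exists Q, (compF p F), q0, qf.
  split; [apply compF_ULF; auto|].
  split; [apply compF_finitary; auto|].
  split; [reflexivity|]. split; [reflexivity|].
  intros g. split.
  - intros [f [Lf <-]]. destruct (proj1 (Hr f) Lf) as [al Hal].
    exists al. simpl. change (mapArr F (pk (fmap p al)) = mapArr F (pk f)).
    rewrite Hal. reflexivity.
  - intros [al Hal]. exists (fmap p al). split.
    + apply Hr. exists al. reflexivity.
    + simpl in Hal. unfold pk in Hal.
      apply inj_pair2 in Hal.
      apply inj_pair2 in Hal. exact Hal.
Qed.
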